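(* Let $P$ be a poset with least element $0$. Then the metric dimension $\dim_M(G(P))$ of the zero-divisor graph $G(P)$ is finite if and only if $G(P)$ is a finite graph.
   Context: For a poset $P$ with $0$ and $A\subseteq P$, $A^{\ell}=\{b\in P: b\le a \text{ for all } a\in A\}$. An element $a\in P$ is a zero-divisor if there is $b\in P\setminus\{0\}$ with $\{a,b\}^{\ell}=\{0\}$; $Z(P)$ is the set of zero-divisors and $Z^*(P)=Z(P)\setminus\{0\}$. The zero-divisor graph $G(P)$ is the simple graph with vertex set $Z^*(P)$ in which distinct $a,b$ are adjacent iff $\{a,b\}^{\ell}=\{0\}$. (It is known that $G(P)$ is connected of diameter at most $3$.) For a connected graph $G$ and an ordered set $S=\{v_1,\dots,v_k\}\subseteq V(G)$, the representation of $v$ is $D(v|S)=(d(v,v_1),\dots,d(v,v_k))$; $S$ is a resolving set if $D(u|S)=D(v|S)$ for $u,v\in V(G)\setminus S$ implies $u=v$. The metric dimension $\dim_M(G)$ is the minimum cardinality of a resolving set. *)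

(* Defs.v *)
From HB Require Import structures.
From mathcomp Require Import all_boot all_order.
From mathcomp Require Import boolp classical_sets cardinality.
Set Implicit Arguments. Unset Strict Implicit. Unset Printing Implicit Defensive.
Import Order.Theory.
Local Open Scope order_scope.
Local Open Scope classical_set_scope.

Inductive walk {T : Type} (V : set T) (adj : T -> T -> Prop) : nat -> T -> T -> Prop :=
| walk0 u : V u -> walk V adj 0 u u
| walkS n u w v : V u -> adj u w -> walk V adj n w v -> walk V adj n.+1 u v.

Definition gdist {T : Type} (V : set T) (adj : T -> T -> Prop) (u v : T) (n : nat) :=
  walk V adj n u v /\ forall m, walk V adj m u v -> (n <= m)%N.

Definition resolving {T : Type} (V : set T) (adj : T -> T -> Prop) (S : set T) :=
  S `<=` V /\
  forall u v, V u -> V v -> ~ S u -> ~ S v ->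
    (forall s, S s -> forall n, gdist V adj u s n <-> gdist V adj v s n) -> u = v.

Definition finite_metric_dim {T : Type} (V : set T) (adj : T -> T -> Prop) :=
  exists S : set T, resolving V adj S /\ finite_set S.

Definition lower_zero {d : Order.disp_t} {P : bPOrderType d} (a b : P) : Prop :=
  forall x : P, x <= a -> x <= b -> x = \bot.

Definition zero_divisor {d : Order.disp_t} {P : bPOrderType d} (a : P) : Prop :=
  exists b : P, b <> \bot /\ lower_zero a b.

Definition Zstar {d : Order.disp_t} (P : bPOrderType d) : set P :=
  [set a | zero_divisor a /\ a <> \bot].

Definition zd_adj {d : Order.disp_t} (P : bPOrderType d) (a b : P) : Prop :=
  a <> b /\ lower_zero a b.

Arguments Zstar {d} P _.
Arguments zd_adj {d} P _ _.

(* Main.v *)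
Require Import Defs.
From HB Require Import structures.
From mathcomp Require Import all_boot all_order.
From mathcomp Require Import boolp classical_sets cardinality.
From Stdlib Require Import Classical.
Set Implicit Arguments. Unset Strict Implicit. Unset Printing Implicit Defensive.
Import Order.Theory.
Local Open Scope order_scope.
Local Open Scope classical_set_scope.

Section Aux.
Variables (d : Order.disp_t) (P : bPOrderType d).

Lemma lz_sym (a b : P) : lower_zero a b -> lower_zero b a.
Proof. by move=> H x h1 h2; apply: H. Qed.

Lemma lz_self (a : P) : lower_zero a a -> a = \bot.
Proof. by move=> H; apply: H. Qed.

Lemma zs_of (a b : P) : a <> \bot -> b <> \bot -> lower_zero a b -> Zstar P a.
Proof. by move=> ha hb h; split => //; exists b. Qed.

Lemma lz_neq (a b : P) : a <> \bot -> lower_zero a b -> a <> b.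
Proof. by move=> ha h E; subst; apply: ha; apply: lz_self. Qed.

Lemma diam (u s : P) : Zstar P u -> Zstar P s ->
  exists m, (m <= 3)%N /\ walk (Zstar P) (zd_adj P) m u s.
Proof.
move=> [[a [ha lua]] hu] [[b [hb lsb]] hs].
have Za : Zstar P a by apply: (zs_of ha hu (lz_sym lua)).
have Zb : Zstar P b by apply: (zs_of hb hs (lz_sym lsb)).
have Zu : Zstar P u by split => //; exists a.
have Zs : Zstar P s by split => //; exists b.
have [eab|nab] := pselect (a = b).
  subst b; exists 2%N; split => //.
  apply: (walkS (w:=a)) Zu _ _; first by split; [exact: lz_neq hu lua|exact: lua].
  refine (walkS Za _ (walk0 _ Zs)); split; [exact: lz_neq ha (lz_sym lsb)|exact: lz_sym].
have [lab|nlab] := pselect (lower_zero a b).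
  exists 3%N; split => //.
  apply: (walkS (w:=a)) Zu _ _; first by split; [exact: lz_neq hu lua|exact: lua].
  apply: (walkS (w:=b)) Za _ _; first by split.
  refine (walkS Zb _ (walk0 _ Zs)); split; [exact: lz_neq hb (lz_sym lsb)|exact: lz_sym].
have [x hx] := not_all_ex_not _ _ nlab.
have [xa hx1] := imply_to_and _ _ hx.
have [xb xn] := imply_to_and _ _ hx1.
have lxu : lower_zero x u.
  by move=> y yx yu; apply: lua => //; apply: le_trans xa.
have lxs : lower_zero x s.
  by move=> y yx ys; apply: lsb => //; apply: le_trans xb.
have Zx : Zstar P x by apply: zs_of xn hu lxu.
exists 2%N; split => //.
apply: (walkS (w:=x)) Zu _ _.
  split; [exact: lz_neq hu (lz_sym lxu)|exact: lz_sym].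
refine (walkS Zx _ (walk0 _ Zs)); split => //; exact: lz_neq xn lxs.
Qed.

Lemma gdist_le3 (u s : P) n : Zstar P u -> Zstar P s ->
  gdist (Zstar P) (zd_adj P) u s n -> (n <= 3)%N.
Proof.
move=> hu hs [_ H]; have [m [hm w]] := diam hu hs.
exact: leq_trans (H _ w) hm.
Qed.

Lemma gdist_uniq (u s : P) n m :
  gdist (Zstar P) (zd_adj P) u s n -> gdist (Zstar P) (zd_adj P) u s m -> n = m.
Proof.
move=> [w1 h1] [w2 h2]; apply/eqP; rewrite eqn_leq.
by rewrite (h1 _ w2) (h2 _ w1).
Qed.

Definition code (u s : P) : nat :=
  match pselect (exists n, gdist (Zstar P) (zd_adj P) u s n) with
  | left H => proj1_sig (cid H)
  | right _ => 4%N end.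

Lemma code_le4 (u s : P) : Zstar P u -> Zstar P s -> (code u s <= 4)%N.
Proof.
move=> hu hs; rewrite /code; case: pselect => // H.
case: cid => n /= hn; apply: leq_trans (gdist_le3 hu hs hn) _ => //.
Qed.

Lemma code_eq (u v s : P) : Zstar P u -> Zstar P v -> Zstar P s ->
  code u s = code v s ->
  forall n, gdist (Zstar P) (zd_adj P) u s n <-> gdist (Zstar P) (zd_adj P) v s n.
Proof.
move=> hu hv hs; rewrite /code.
case: pselect => Hu; case: pselect => Hv.
- case: cid => n1 /= h1; case: cid => n2 /= h2 E; subst n2.
  move=> n; split => h.
    by rewrite (gdist_uniq h h1).
  by rewrite (gdist_uniq h h2).
- case: cid => n1 /= h1 E; have := gdist_le3 hu hs h1; by rewrite E.
- case: cid => n2 /= h2 E; have := gdist_le3 hv hs h2; by rewrite -E.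
- move=> _ n; split => h; [case: Hu | case: Hv]; by exists n.
Qed.

End Aux.

Theorem mainTheorem1 (d : Order.disp_t) (P : bPOrderType d) :
  finite_metric_dim (Zstar P) (zd_adj P) <-> finite_set (Zstar P).
Proof.
split; last first.
  move=> fin; exists (Zstar P); split; last exact: fin.
  split; first by [].
  by move=> u v hu _ nu; case: nu.
move=> [S [[SV Sres] /finite_seqP [l El]]].
pose A := Zstar P `\` S.
pose f (u : P) : (size l).-tuple 'I_5 :=
  map_tuple (fun s => (inord (code u s) : 'I_5)) (in_tuple l).
pose g (y : (size l).-tuple 'I_5) : P :=
  match pselect (exists u, A u /\ f u = y) with
  | left H => proj1_sig (cid H)
  | right _ => \bot end.
have finj : forall u v, A u -> A v -> f u = f v -> u = v.
  move=> u v [hu nu] [hv nv] E.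
  apply: Sres => // s Ss.
  have hs := SV _ Ss.
  apply: code_eq => //.
  have E' := congr1 val E; rewrite /= in E'.
  move/eq_in_map: E' => E'; rewrite El in Ss.
  move: (E' s Ss) => /(congr1 val).
  by rewrite /= !inordK // ltnS code_le4.
have sub : Zstar P `<=` S `|` (g @` setT).
  move=> u hu; have [Su|nSu] := pselect (S u); first by left.
  right; exists (f u) => //.
  rewrite /g; case: pselect => [H|H]; last by case: H; exists u.
  case: cid => v [hv fv] /=; apply: finj => //.
apply: (sub_finite_set sub); rewrite finite_setU; split.
  by rewrite El.
exact: finite_image.
Qed.
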